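(* Let $m>1$ and $a\in\mathbb{Z}_m$ with $2a^2-2a+1\equiv0\pmod m$, let $x\cdot y=ax+(1-a)y$ and $x\circ y=(1-a)x+ay$ on $\mathbb{Z}_m$. Then for $1\le k<m$, $(\mathbb{Z}_m,\cdot)$ is $k$-translatable if and only if $(\mathbb{Z}_m,\circ)$ is $(m-k)$-translatable (both with respect to the ordering $0,1,\dots,m-1$).
   Context: $(\mathbb{Z}_m,\cdot)$ is a quadratical quasigroup and $(\mathbb{Z}_m,\circ)$ is its dual ($x\circ y=y\cdot x$). A finite groupoid with ordering $q_1,\dots,q_n$ is $k$-translatable ($1\le k<n$) with respect to this ordering if $q_i\cdot q_j=q_{i-1}\cdot q_{j-k}$ for all $i\in\{2,\dots,n\}$, $j\in\{1,\dots,n\}$, indices taken modulo $n$ in $\{1,\dots,n\}$. *)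

(* Defs.v *)
From mathcomp Require Import all_boot all_algebra.
Set Implicit Arguments. Unset Strict Implicit. Unset Printing Implicit Defensive.
Import GRing.Theory.
Local Open Scope ring_scope.

Definition idx_mod (n : nat) (i : int) : nat :=
  (absz ((i - 1) %% n)%Z).+1.

Definition k_translatable (T : Type) (op : T -> T -> T) (n : nat)
    (q : nat -> T) (k : nat) : Prop :=
  (1 <= k < n)%N /\
  forall i j : nat, (2 <= i <= n)%N -> (1 <= j <= n)%N ->
    op (q i) (q j) =
    op (q (idx_mod n (i%:Z - 1))) (q (idx_mod n (j%:Z - k%:Z))).

Definition std_order (m : nat) (i : nat) : 'Z_m := (i.-1)%:R.

Definition qdot (m : nat) (a : 'Z_m) (x y : 'Z_m) : 'Z_m := a * x + (1 - a) * y.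
Definition qcirc (m : nat) (a : 'Z_m) (x y : 'Z_m) : 'Z_m := (1 - a) * x + a * y.

(* Main.v *)
Require Import Defs.
From mathcomp Require Import all_boot all_algebra ring.
Local Open Scope ring_scope.
Import GRing.Theory.

Lemma modz_Zp (m : nat) (z : int) : (1 < m)%N ->
  (((z %% m)%Z)%:~R : 'Z_m) = z%:~R.
Proof.
move=> Hm; symmetry; rewrite {1}(divz_eq z m) intrD intrM.
have -> : ((m%:Z)%:~R : 'Z_m) = 0 by rewrite -pmulrn char_Zp.
by rewrite mulr0 add0r.
Qed.

Lemma std_idx (m : nat) (t : int) : (1 < m)%N ->
  std_order m (idx_mod m t) = (t - 1)%:~R.
Proof.
move=> Hm; rewrite /std_order /idx_mod /=.
have m0 : (m%:Z != 0) by rewrite eqz_nat; case: m Hm.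
have h := modz_ge0 (t - 1) m0.
have -> : (absz ((t - 1) %% m)%Z)%:R = (((t - 1) %% m)%Z)%:~R :> 'Z_m.
  by case: ((t - 1) %% m)%Z h.
exact: modz_Zp.
Qed.

Lemma lin_trans (m : nat) (b c : 'Z_m) (k : nat) : (1 < m)%N ->
  k_translatable (fun x y => b * x + c * y) m (@std_order m) k <->
  (1 <= k < m)%N /\ b + c * k%:R = 0.
Proof.
move=> Hm; rewrite /k_translatable; split=> -[Hk H]; split=> //.
  have := H 2%N 1%N (Hm : (1 < 2 <= m)%N) (ltnW Hm : (0 < 1 <= m)%N).
  rewrite !std_idx // /std_order /=.
have e1 : ((2%:Z - 1 - 1)%:~R : 'Z_m) = 0 by [].
  have e2 : ((1%:Z - k%:Z - 1)%:~R : 'Z_m) = - k%:R.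
    by rewrite addrAC subrr add0r intrN.
  move=> E; rewrite mulr1 mulr0 addr0 e1 e2 mulr0 add0r in E.
  by rewrite E mulrN addNr.
move=> i j /andP [Hi _] /andP [Hj _].
rewrite !std_idx // /std_order.
have ei : ((i%:Z - 1 - 1)%:~R : 'Z_m) = (i.-1)%:R - 1.
  by case: i Hi => // i _; rewrite !intrB /= [_%:~R]/intmul /= mulrS; ring.
have ej : ((j%:Z - k%:Z - 1)%:~R : 'Z_m) = (j.-1)%:R - k%:R.
  by case: j Hj => // j _; rewrite !intrB /= [(Posz _)%:~R]/intmul /= mulrS; ring.
rewrite ei ej !mulrBr.
have -> : b * (i.-1)%:R - b * 1 + (c * (j.-1)%:R - c * k%:R) =
   b * (i.-1)%:R + c * (j.-1)%:R - (b + c * k%:R) by rewrite mulr1; ring.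
by rewrite H subr0.
Qed.

Theorem theorem9p4 (m : nat) (a : 'Z_m) (k : nat) :
  (1 < m)%N ->
  2 * a ^+ 2 - 2 * a + 1 = 0 ->
  (1 <= k < m)%N ->
  (k_translatable (qdot a) m (@std_order m) k <->
   k_translatable (qcirc a) m (@std_order m) (m - k)).
Proof.
move=> Hm h Hk.
change (k_translatable (fun x y => a * x + (1 - a) * y) m (@std_order m) k <->
  k_translatable (fun x y => (1 - a) * x + a * y) m (@std_order m) (m - k)).
rewrite !lin_trans //.
have Hk' : (1 <= m - k < m)%N.
  case/andP: Hk => H1 H2; apply/andP; split; first by rewrite subn_gt0.
  by rewrite ltn_subrL H1 (leq_ltn_trans _ H2).
have -> : ((m - k)%:R : 'Z_m) = - k%:R.
  by rewrite natrB ?char_Zp ?sub0r // ltnW //; case/andP: Hk.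
set K : 'Z_m := k%:R.
split=> -[_ E]; split=> //.
  have e1 : (1 - a) * (1 - a + a * - K) = (2 * a ^+ 2 - 2 * a + 1) - a * (a + (1 - a) * K) by ring.
  have e2 : (1 - a + a * - K) = 2 * a * ((1 - a) * (1 - a + a * - K)) + (1 - a + a * - K) * (2 * a ^+ 2 - 2 * a + 1) by ring.
  by rewrite e2 e1 h E !mulr0 !addr0 subr0 mulr0.
have e1 : a * (a + (1 - a) * K) = (2 * a ^+ 2 - 2 * a + 1) - (1 - a) * (1 - a + a * - K) by ring.
have e2 : a + (1 - a) * K = (2 - 2 * a) * (a * (a + (1 - a) * K)) + (a + (1 - a) * K) * (2 * a ^+ 2 - 2 * a + 1) by ring.
rewrite e2 e1 h E.
by rewrite !mulr0 subr0 mulr0 addr0.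
Qed.
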